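(* Let $M_1,\dots,M_k$ be matroids on pairwise disjoint finite sets $S_1,\dots,S_k$, let $S=S_1\cup\cdots\cup S_k$, and let $L=M_1\mathbin{\Box}\cdots\mathbin{\Box} M_k$. Then $A\subseteq S$ is independent in $L$ if and only if $$\sum_{i=1}^{j-1}\lambda_{M_i}(A\cap S_i)\ \geq\ \sum_{i=1}^{j}\nu_{M_i}(A\cap S_i)$$ for all $j$ with $1\leq j\leq k$.
   Context: For a matroid $M$ on $S$ write $\rho_M$ for rank, $\rho(M)=\rho_M(S)$, $\nu_M(A)=|A|-\rho_M(A)$, $\lambda_M(A)=\rho(M)-\rho_M(A)$. For matroids $M$ on $S$ and $N$ on $T$ with $S\cap T=\emptyset$, the free product $M\mathbin{\Box} N$ is the matroid on $S\cup T$ whose independent sets are those $A$ with $A\cap S$ independent in $M$ and $\lambda_M(A\cap S)\geq\nu_N(A\cap T)$. Free product is associative, so the iterated product needs no parentheses. *)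

(* Defs.v *)
From mathcomp Require Import all_boot.
Set Implicit Arguments. Unset Strict Implicit. Unset Printing Implicit Defensive.

Record setsys (T : finType) := SetSys { ground : {set T}; indep : {set T} -> bool }.

Definition is_matroid (T : finType) (M : setsys T) : Prop :=
  [/\ indep M set0,
      (forall B : {set T}, indep M B -> B \subset ground M),
      (forall A B : {set T}, A \subset B -> indep M B -> indep M A) &
      (forall A B : {set T}, indep M A -> indep M B -> #|A| < #|B| ->
         exists2 x, x \in B :\: A & indep M (x |: A))].

Section Ops.
Variable T : finType.
Implicit Types (M N : setsys T) (A : {set T}).

Definition rk M A : nat := \max_(B : {set T} | (B \subset A) && indep M B) #|B|.
Definition rkM M : nat := rk M (ground M).
Definition nul M A : nat := #|A| - rk M A.
Definition lam M A : nat := rkM M - rk M A.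

Definition fprod M N : setsys T :=
  SetSys (ground M :|: ground N)
    (fun A => [&& A \subset ground M :|: ground N,
                  indep M (A :&: ground M) &
                  nul N (A :&: ground N) <= lam M (A :&: ground M)]).

(* Left-bracketed iterated free product M 1 [] M 2 [] ... [] M n (for n >= 1). *)
Fixpoint fprod_upto (Ms : nat -> setsys T) (n : nat) : setsys T :=
  match n with
  | 0 => Ms 1
  | n'.+1 => if n' == 0 then Ms 1 else fprod (fprod_upto Ms n') (Ms n)
  end.
End Ops.

(* Main.v *)
Require Import Defs.
From mathcomp Require Import all_boot.
From mathcomp Require Import zify.

Set Implicit Arguments. Unset Strict Implicit.
Section Aux.
Lemma subI0 (T0 : finType) (X Y : {set T0}) : X \subset Y -> Y = set0 -> X = set0.
Proof. by move=> sXY eY; apply/eqP; rewrite -subset0 -eY. Qed.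

Variable T : finType.
Implicit Types (L N : setsys T) (A B : {set T}).

Lemma rk_le_card L A : rk L A <= #|A|.
Proof.
apply/bigmax_leqP => B /andP [sBA _]; exact: subset_leq_card.
Qed.

Lemma rk_indep L A : indep L A -> rk L A = #|A|.
Proof.
move=> iA; apply/eqP; rewrite eqn_leq rk_le_card /= /rk.
by apply: (leq_bigmax_cond A); rewrite subxx iA.
Qed.

Lemma rk_mono L A B : A \subset B -> rk L A <= rk L B.
Proof.
move=> sAB; apply/bigmax_leqP => C /andP [sCA iC]; rewrite /rk.
apply: (leq_bigmax_cond C).
by rewrite (subset_trans sCA sAB) iC.
Qed.

Lemma rk_attained L A : indep L set0 ->
  exists2 B : {set T}, (B \subset A) && indep L B & #|B| = rk L A.
Proof.
move=> i0.
have hP : 0 < #|[pred B : {set T} | (B \subset A) && indep L B]|.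
  by apply/card_gt0P; exists set0; rewrite inE sub0set i0.
have [B0 HB0 E] := eq_bigmax_cond (fun B : {set T} => #|B|) hP.
exists B0; first by move: HB0; rewrite inE.
by rewrite /rk -E.
Qed.

Lemma indep_of_nul0 L A : indep L set0 -> nul L A <= 0 -> indep L A.
Proof.
move=> i0; rewrite /nul leqn0 subn_eq0 => h.
have [B /andP [sBA iB] E] := rk_attained A i0.
have eBA : B = A.
  apply/eqP; rewrite eqEcard sBA /= E //.
by rewrite -eBA.
Qed.

Lemma rkM_fprod L N :
  indep L set0 -> indep N set0 -> [disjoint ground L & ground N] ->
  rkM (Defs.fprod L N) = rkM L + rkM N.
Proof.
move=> iL iN dLN.
have dI : ground L :&: ground N = set0 by apply/eqP; rewrite setI_eq0.
apply/eqP; rewrite eqn_leq; apply/andP; split.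
  apply/bigmax_leqP => C /andP [_ /and3P [sC iCL hN]].
  set CL := C :&: ground L; set CN := C :&: ground N.
  have eC : C = CL :|: CN by rewrite -setIUr; apply/esym/setIidPl.
  have dC : CL :&: CN = set0.
    by apply: (subI0 _ dI); apply: setISS; exact: subsetIr.
  have cC : #|C| = #|CL| + #|CN| by rewrite -cardsUI dC cards0 addn0 -eC.
  have r1 : rk L CL = #|CL| := rk_indep iCL.
  have r2 : rk L CL <= rkM L by apply: rk_mono; exact: subsetIr.
  have r3 : rk N CN <= rkM N by apply: rk_mono; exact: subsetIr.
  have r4 := rk_le_card N CN.
  move: hN; rewrite /nul /lam -/CL -/CN cC; lia.
have [BL /andP [sBL iBL] EL] := rk_attained (ground L) iL.
have [BN /andP [sBN iBN] EN] := rk_attained (ground N) iN.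
have dB : BL :&: BN = set0.
  by apply: (subI0 (setSI _ sBL)); rewrite setIC; apply: (subI0 (setSI _ sBN)); rewrite setIC.
have e1 : (BL :|: BN) :&: ground L = BL.
  rewrite setIUl (setIidPl sBL) (_ : BN :&: ground L = set0) ?setU0 //.
  by apply: (subI0 (setSI _ sBN)); rewrite setIC.
have e2 : (BL :|: BN) :&: ground N = BN.
  rewrite setIUl (setIidPl sBN) (_ : BL :&: ground N = set0) ?set0U //.
  exact: (subI0 (setSI _ sBL)).
rewrite /rkM -EL -EN -cardsUI dB cards0 addn0 /rk.
apply: (leq_bigmax_cond (BL :|: BN)).
by rewrite /= setUSS //= e1 e2 iBL /nul rk_indep // subnn.
Qed.

Variable M : nat -> setsys T.
Definition G n := \bigcup_(1 <= i < n.+1) ground (M i).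
Definition cond A j := \sum_(1 <= i < j.+1) nul (M i) (A :&: ground (M i))
          <= \sum_(1 <= i < j) lam (M i) (A :&: ground (M i)).

Lemma GS n : G n.+1 = G n :|: ground (M n.+1).
Proof. by rewrite /G big_nat_recr. Qed.

Lemma subG n i : 1 <= i <= n -> ground (M i) \subset G n.
Proof.
elim: n => [|n IH] /andP [i1 hi]; first by lia.
rewrite GS; case: (ltnP i n.+1) => h.
  by apply: subset_trans (subsetUl _ _); apply: IH; rewrite i1.
have -> : i = n.+1 by lia.
exact: subsetUr.
Qed.

Lemma disjG n (X : {set T}) : (forall i, 1 <= i <= n -> [disjoint ground (M i) & X]) ->
  G n :&: X = set0.
Proof.
elim: n => [|n IH] h; first by rewrite /G big_geq // set0I.
rewrite GS setIUl IH; last by move=> i /andP [i1 hi]; apply: h; rewrite i1; lia.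
by rewrite set0U; apply/eqP; rewrite setI_eq0; apply: h; lia.
Qed.

Lemma cardG n A : (forall i j, 1 <= i -> i < j -> j <= n ->
     [disjoint ground (M i) & ground (M j)]) ->
  #|A :&: G n| = \sum_(1 <= i < n.+1) #|A :&: ground (M i)|.
Proof.
elim: n => [|n IH] h; first by rewrite /G !big_geq // setI0 cards0.
rewrite GS big_nat_recr //= -IH; last by move=> i j *; apply: h => //; lia.
rewrite setIUr -cardsUI.
have -> : A :&: G n :&: (A :&: ground (M n.+1)) = set0.
  apply: (subI0 _ (disjG (X := ground (M n.+1)) _)); first by apply: setISS; exact: subsetIr.
  by move=> i /andP [i1 hi]; apply: h => //; lia.
by rewrite cards0 addn0.
Qed.

Lemma step n L : 1 <= n ->
  (forall i, 1 <= i <= n.+1 -> is_matroid (M i)) ->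
  (forall i j, 1 <= i -> i < j -> j <= n.+1 ->
     [disjoint ground (M i) & ground (M j)]) ->
  ground L = G n -> indep L set0 ->
  rkM L = \sum_(1 <= i < n.+1) rkM (M i) ->
  (forall A, A \subset G n -> (indep L A <-> forall j, 1 <= j <= n -> cond A j)) ->
  [/\ ground (Defs.fprod L (M n.+1)) = G n.+1,
      indep (Defs.fprod L (M n.+1)) set0,
      rkM (Defs.fprod L (M n.+1)) = \sum_(1 <= i < n.+2) rkM (M i) &
      forall A, A \subset G n.+1 ->
        (indep (Defs.fprod L (M n.+1)) A <-> forall j, 1 <= j <= n.+1 -> cond A j)].
Proof.
move=> n1 hM hD gL i0 rL chL.
have [m0 _ _ _] := hM n.+1 ltac:(lia).
have gF : ground (Defs.fprod L (M n.+1)) = G n.+1 by rewrite /= gL GS.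
split => //.
- by rewrite /= !set0I sub0set i0 /= /nul cards0.
- rewrite rkM_fprod ?m0 //; first by rewrite big_nat_recr //= rL.
  rewrite gL -setI_eq0.
  by apply/eqP/disjG => i /andP [i1 hi]; apply: hD => //; lia.
move=> A sA.
set A' := A :&: G n.
have sA' : A' \subset G n by exact: subsetIr.
have eI : forall i, 1 <= i <= n -> A' :&: ground (M i) = A :&: ground (M i).
  move=> i hi; rewrite /A' -setIA; congr (_ :&: _); apply/setIidPr; exact: subG.
have eC : forall j, 1 <= j <= n -> cond A' j = cond A j.
  move=> j /andP [j1 jn]; rewrite /cond.
  rewrite (eq_big_nat _ _ (F1 := fun i => nul (M i) (A' :&: ground (M i)))
     (F2 := fun i => nul (M i) (A :&: ground (M i)))); last by move=> i hi; rewrite eI //; lia.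
  rewrite (eq_big_nat _ _ (F1 := fun i => lam (M i) (A' :&: ground (M i)))
     (F2 := fun i => lam (M i) (A :&: ground (M i)))) //; by move=> i hi; rewrite eI //; lia.
have key : indep L A' ->
  (nul (M n.+1) (A :&: ground (M n.+1)) <= lam L A') = cond A n.+1.
  move=> iA'.
  have h4 : rk L A' <= rkM L by apply: rk_mono; rewrite gL.
  move: h4.
  rewrite /lam rL (rk_indep iA') /A' cardG; last by move=> i j *; apply: hD => //; lia.
  rewrite /cond.
  rewrite /nul /lam.
  rewrite (@sumnB _ _ _ (fun i => rk (M i) (A :&: ground (M i)))
                 (fun i => #|A :&: ground (M i)|)); last by move=> i _; exact: rk_le_card.
  rewrite (@sumnB _ _ _ (fun i => rk (M i) (A :&: ground (M i)))
                 (fun i => rkM (M i))); last by move=> i _; apply: rk_mono; exact: subsetIr.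
  have h1 : \sum_(1 <= i < n.+1) rk (M i) (A :&: ground (M i)) <=
            \sum_(1 <= i < n.+1) #|A :&: ground (M i)|.
    by apply: leq_sum => i _; exact: rk_le_card.
  have h2 : \sum_(1 <= i < n.+1) rk (M i) (A :&: ground (M i)) <=
            \sum_(1 <= i < n.+1) rkM (M i).
    by apply: leq_sum => i _; apply: rk_mono; exact: subsetIr.
  have e3 : \sum_(1 <= i < n.+2) #|A :&: ground (M i)| =
     \sum_(1 <= i < n.+1) #|A :&: ground (M i)| + #|A :&: ground (M n.+1)|.
    by rewrite big_nat_recr.
  have e4 : \sum_(1 <= i < n.+2) rk (M i) (A :&: ground (M i)) =
     \sum_(1 <= i < n.+1) rk (M i) (A :&: ground (M i)) + rk (M n.+1) (A :&: ground (M n.+1)).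
    by rewrite big_nat_recr.
  have h3 := rk_le_card (M n.+1) (A :&: ground (M n.+1)).
  rewrite e3 e4; move=> h4; apply/idP/idP; lia.
have -> : indep (Defs.fprod L (M n.+1)) A =
   [&& A \subset G n.+1, indep L A' &
       nul (M n.+1) (A :&: ground (M n.+1)) <= lam L A'] by rewrite /= gL GS.
rewrite sA /=.
have := chL A' sA'.
split.
  move=> /andP [iA' hx] j /andP [j1 jn].
  case: (ltnP j n.+1) => hj.
    rewrite -eC; last by lia.
    by apply: (proj1 (chL A' sA')) => //; lia.
  have -> : j = n.+1 by lia.
  by rewrite -key.
move=> hc.
have iA' : indep L A'.
  apply/(chL A' sA') => j hj; rewrite eC //; apply: hc; lia.
by rewrite iA' /= key //; apply: hc; lia.
Qed.

End Aux.

Lemma main_claim (T : finType) (M : nat -> setsys T) k :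
  (forall i, 1 <= i <= k -> is_matroid (M i)) ->
  (forall i j, 1 <= i -> i < j -> j <= k ->
     [disjoint ground (M i) & ground (M j)]) ->
  forall n, 1 <= n <= k ->
  [/\ ground (fprod_upto M n) = G M n, indep (fprod_upto M n) set0,
      rkM (fprod_upto M n) = \sum_(1 <= i < n.+1) rkM (M i) &
      forall A : {set T}, A \subset G M n ->
        (indep (fprod_upto M n) A <-> forall j, 1 <= j <= n -> cond M A j)].
Proof.
move=> hM hD; elim => [|n IH] hn; first by lia.
case: n IH hn => [|m] IH hn.
  have [m0 _ _ _] := hM 1 ltac:(lia).
  have g1 : G M 1 = ground (M 1) by rewrite /G big_nat1.
  rewrite /= g1 big_nat1; split => // A sA.
  have hA : A :&: ground (M 1) = A by apply/setIidPl.
  split.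
    move=> iA j /andP [j1 jn]; have -> : j = 1 by lia.
    by rewrite /cond big_nat1 big_geq // hA /nul rk_indep // subnn.
  move=> h; have := h 1 ltac:(lia); rewrite /cond big_nat1 big_geq // hA.
  exact: indep_of_nul0.
have [g i0 r c] := IH ltac:(lia).
have -> : fprod_upto M m.+2 = Defs.fprod (fprod_upto M m.+1) (M m.+2) by [].
apply: step => //.
- by move=> i hi; apply: hM; lia.
- by move=> i j *; apply: hD => //; lia.
Qed.

Unset Implicit Arguments.

Theorem proposition4p5 (T : finType) (k : nat) (M : nat -> setsys T) :
  1 <= k ->
  (forall i, 1 <= i <= k -> is_matroid (M i)) ->
  (forall i j, 1 <= i -> i < j -> j <= k ->
     [disjoint ground (M i) & ground (M j)]) ->
  forall A : {set T},
    A \subset \bigcup_(1 <= i < k.+1) ground (M i) ->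
    (indep (fprod_upto M k) A <->
     (forall j, 1 <= j <= k ->
        \sum_(1 <= i < j.+1) nul (M i) (A :&: ground (M i))
          <= \sum_(1 <= i < j) lam (M i) (A :&: ground (M i)))).
Proof.
move=> k1 hM hD A sA.
have [_ _ _ c] := main_claim hM hD (n := k) ltac:(lia).
exact: c.
Qed.
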